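(* Let $g:L_s\to[0,1]$ be a continuous encoding of $[0,1]$ with zero redundancy, and let $x_0\in[0,1]$ be a $g$-unary point with $g$-code $(c_n)$. For $x\neq x_0$ with a $g$-code $(\alpha_n(x))$, let $m=m(x)$ be the index such that $\alpha_m(x)\neq c_m$ and $\alpha_i(x)=c_i$ for all $i<m$. Then $x\to x_0$ if and only if $m\to\infty$; that is, for any sequence $(x_k)$ of points of $[0,1]\setminus\{x_0\}$ (each with a chosen $g$-code), $x_k\to x_0$ if and only if $m(x_k)\to\infty$.
   Context: $A_s=\{0,1,\dots,s-1\}$ ($s\ge2$) and $L_s=A_s\times A_s\times\cdots$ is the space of sequences over $A_s$. An encoding of $[0,1]$ is a surjective map $g:L_s\to[0,1]$; if $g((\alpha_n))=x$, $(\alpha_n)$ is a $g$-code of $x$. The $g$-cylinder of rank $m$ with base $c_1\dots c_m$ is $\Delta^g_{c_1\dots c_m}=\{g((c_1,\dots,c_m,\alpha_1,\alpha_2,\dots)):(\alpha_n)\in L_s\}$. The encoding has zero redundancy if every point has at most two $g$-codes and the set of points with two $g$-codes is at most countable; points with exactly one code are $g$-unary. The encoding is continuous if every $g$-cylinder is an interval and any two distinct cylinders of the same rank have no common interior points. *)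

(* Defs.v *)
From Stdlib Require Import Reals Lra List.
Open Scope R_scope.

(* L_s: sequences over A_s = {0,...,s-1}, indexed from 0 (paper indexes from 1). *)
Definition valid_seq (s : nat) (a : nat -> nat) : Prop := forall n, (a n < s)%nat.

Definition valid_word (s : nat) (w : list nat) : Prop := Forall (fun d => (d < s)%nat) w.

Definition prepend (w : list nat) (a : nat -> nat) : nat -> nat :=
  fun n => if Nat.ltb n (length w) then nth n w 0%nat else a (n - length w)%nat.

Definition is_encoding (s : nat) (g : (nat -> nat) -> R) : Prop :=
  (forall a, valid_seq s a -> 0 <= g a <= 1) /\
  (forall x, 0 <= x <= 1 -> exists a, valid_seq s a /\ g a = x).

Definition is_code (s : nat) (g : (nat -> nat) -> R) (x : R) (a : nat -> nat) : Prop :=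
  valid_seq s a /\ g a = x.

Definition cylinder (s : nat) (g : (nat -> nat) -> R) (w : list nat) : R -> Prop :=
  fun x => exists a, valid_seq s a /\ g (prepend w a) = x.

Definition is_interval (S : R -> Prop) : Prop :=
  forall x y z, S x -> S y -> x <= z <= y -> S z.

Definition interior_point (S : R -> Prop) (x : R) : Prop :=
  exists eps, 0 < eps /\ forall y, Rabs (y - x) < eps -> S y.

Definition continuous_encoding (s : nat) (g : (nat -> nat) -> R) : Prop :=
  (forall w, valid_word s w -> is_interval (cylinder s g w)) /\
  (forall w1 w2, valid_word s w1 -> valid_word s w2 -> length w1 = length w2 ->
     w1 <> w2 -> forall x, ~ (interior_point (cylinder s g w1) x /\
                              interior_point (cylinder s g w2) x)).

Definition zero_redundancy (s : nat) (g : (nat -> nat) -> R) : Prop :=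
  (forall x, 0 <= x <= 1 -> forall a b c, is_code s g x a -> is_code s g x b ->
     is_code s g x c -> a = b \/ a = c \/ b = c) /\
  (exists f : nat -> R, forall x, 0 <= x <= 1 ->
     (exists a b, is_code s g x a /\ is_code s g x b /\ a <> b) ->
     exists k, f k = x).

Definition unary_with_code (s : nat) (g : (nat -> nat) -> R) (x : R) (c : nat -> nat) : Prop :=
  is_code s g x c /\ forall a, is_code s g x a -> a = c.

Definition first_diff (a c : nat -> nat) (m : nat) : Prop :=
  a m <> c m /\ forall i, (i < m)%nat -> a i = c i.

Definition tends_to_infinity (u : nat -> nat) : Prop :=
  forall M, exists N, forall k, (N <= k)%nat -> (M <= u k)%nat.

(* Main.v *)
Require Import Defs.
From Stdlib Require Import Reals.
From Stdlib Require Import Lra Lia List Classical FunctionalExtensionality ClassicalEpsilon.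
Open Scope R_scope.

Definition Cyl (s : nat) (G : (nat -> nat) -> R) (a : nat -> nat) (n : nat) (y : R) : Prop :=
  exists e, valid_seq s e /\ (forall i, (i < n)%nat -> e i = a i) /\ G e = y.

Definition H3 (s : nat) (G : (nat -> nat) -> R) : Prop :=
  forall a b c, valid_seq s a -> valid_seq s b -> valid_seq s c ->
    G a = G b -> G a = G c -> a = b \/ a = c \/ b = c.

Lemma Cyl_ext s G a a' N y : (forall i, (i < N)%nat -> a i = a' i) -> Cyl s G a N y -> Cyl s G a' N y.
Proof.
  intros H [e [He [Ha Hg]]]. exists e. split; [exact He|split; [|exact Hg]].
  intros i Hi. rewrite Ha by exact Hi. apply H; exact Hi.
Qed.

Lemma Cyl_mono s G a N N' y : (N <= N')%nat -> Cyl s G a N' y -> Cyl s G a N y.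
Proof.
  intros HN [e [He [Ha Hg]]]. exists e. split; [exact He|split; [|exact Hg]].
  intros i Hi. apply Ha. lia.
Qed.

Lemma neq_fun (e b : nat -> nat) : e <> b -> exists d, e d <> b d.
Proof.
  intros H. apply NNPP. intros H'. apply H. apply functional_extensionality.
  intros i. apply NNPP. intros Hi. apply H'. exists i. exact Hi.
Qed.

Lemma lim3 s G (h3 : H3 s G) b y : (forall N, Cyl s G b N y) -> G b = y.
Proof.
  intros HN. apply NNPP. intros Hne.
  destruct (HN 0%nat) as [e0 [V0 [A0 G0]]].
  assert (e0 <> b) as N0 by (intro E; subst; auto).
  destruct (neq_fun _ _ N0) as [d0 D0].
  destruct (HN (S d0)) as [e1 [V1 [A1 G1]]].
  assert (e1 <> b) as N1 by (intro E; subst; auto).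
  destruct (neq_fun _ _ N1) as [d1 D1].
  assert (d1 >= S d0)%nat as Hd.
  { destruct (Nat.lt_ge_cases d1 (S d0)) as [l|l]; [|lia]. exfalso. apply D1. apply A1. exact l. }
  destruct (HN (S d1)) as [e2 [V2 [A2 G2]]].
  destruct (h3 e0 e1 e2 V0 V1 V2) as [E|[E|E]]; try congruence.
  - apply D0. rewrite E. apply A1. lia.
  - apply D0. rewrite E. apply A2. lia.
  - apply D1. rewrite E. apply A2. lia.
Qed.

Lemma pigeon (S : nat -> R -> Prop) (Q : R -> R -> Prop)
  (HQ : forall t t' y, Q t y -> t <= t' -> Q t' y) (n : nat) :
  (forall t, 0 < t -> exists y, (exists i, (i < n)%nat /\ S i y) /\ Q t y) ->
  exists i, (i < n)%nat /\ forall t, 0 < t -> exists y, S i y /\ Q t y.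
Proof.
  induction n as [|n IH]; intros H.
  - destruct (H 1 ltac:(lra)) as [y [[i [Hi _]] _]]. lia.
  - destruct (classic (forall t, 0 < t -> exists y, S n y /\ Q t y)) as [Hn|Hn].
    + exists n. split; [lia|exact Hn].
    + apply not_all_ex_not in Hn. destruct Hn as [t0 Ht0].
      apply imply_to_and in Ht0. destruct Ht0 as [Ht0 Hno].
      destruct IH as [i [Hi Hi']].
      * intros t Ht. destruct (H (Rmin t t0) ltac:(apply Rmin_glb_lt; lra)) as [y [[i [Hi Si]] Qy]].
        destruct (Nat.eq_dec i n) as [->|Hin].
        -- exfalso. apply Hno. exists y. split; [exact Si|]. apply (HQ _ _ _ Qy). apply Rmin_r.
        -- exists y. split; [exists i; split; [lia|exact Si]|]. apply (HQ _ _ _ Qy). apply Rmin_l.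
      * exists i. split; [lia|exact Hi'].
Qed.

Lemma right_fill (S : R -> Prop) x0 : is_interval S ->
  (forall t, 0 < t -> exists y, S y /\ x0 < y < x0 + t) ->
  exists t, 0 < t /\ forall z, x0 < z < x0 + t -> S z.
Proof.
  intros HI H. destruct (H 1 ltac:(lra)) as [p [Sp Hp]].
  exists (p - x0). split; [lra|]. intros z Hz.
  destruct (H (z - x0) ltac:(lra)) as [q [Sq Hq]].
  apply (HI q p z Sq Sp). lra.
Qed.

Definition upd (b : nat -> nat) (n d : nat) : nat -> nat :=
  fun i => if Nat.eqb i n then d else b i.

Definition good s G x0 (n : nat) (p : (nat -> nat) * R) : Prop :=
  0 < snd p /\ forall z, x0 < z < x0 + snd p -> Cyl s G (fst p) n z.

Lemma step s G x0 (HI : forall a n, is_interval (Cyl s G a n)) n p :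
  good s G x0 n p -> exists p', good s G x0 (S n) p' /\ forall i, (i < n)%nat -> fst p' i = fst p i.
Proof.
  destruct p as [b tb]. unfold good; simpl. intros [Htb Hb].
  destruct (pigeon (fun d y => Cyl s G (upd b n d) (S n) y) (fun t y => x0 < y < x0 + t)
     ltac:(intros; lra) s) as [d [Hd Hacc]].
  - intros t Ht. set (y := x0 + Rmin t tb / 2).
    assert (0 < Rmin t tb) by (apply Rmin_glb_lt; lra).
    assert (Rmin t tb <= t) by apply Rmin_l. assert (Rmin t tb <= tb) by apply Rmin_r.
    destruct (Hb y ltac:(unfold y; lra)) as [e [Ve [Ae Ge]]].
    exists y. split; [|unfold y; lra].
    exists (e n). split; [apply Ve|]. exists e. split; [exact Ve|split; [|exact Ge]].
    intros i Hi. unfold upd. destruct (Nat.eqb_spec i n) as [->|Hin]; [reflexivity|].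
    apply Ae. lia.
  - destruct (right_fill _ x0 (HI (upd b n d) (S n)) Hacc) as [t' [Ht' Hf]].
    exists (upd b n d, t'). simpl. split; [split; assumption|].
    intros i Hi. unfold upd. destruct (Nat.eqb_spec i n); [lia|reflexivity].
Qed.

Fixpoint iterB (f : nat -> (nat -> nat) * R -> (nat -> nat) * R) (n0 : nat) (p0 : (nat -> nat) * R) (r : nat) :=
  match r with
  | O => p0
  | S r' => f (n0 + r')%nat (iterB f n0 p0 r')
  end.

Lemma main_right s G x0 (HI : forall a n, is_interval (Cyl s G a n)) (h3 : H3 s G)
  a n0 t (Ht : 0 < t) (Hin : forall z, x0 < z < x0 + t -> Cyl s G a n0 z)
  (Hout : ~ Cyl s G a n0 x0) : False.
Proof.
  assert (Hf : forall n p, exists p', good s G x0 n p -> good s G x0 (S n) p' /\ forall i, (i < n)%nat -> fst p' i = fst p i).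
  { intros n p. destruct (classic (good s G x0 n p)) as [Hg|Hg].
    - destruct (step s G x0 HI n p Hg) as [p' Hp']. exists p'. intros _. exact Hp'.
    - exists p. intros H; contradiction. }
  set (f := fun n p => proj1_sig (constructive_indefinite_description _ (Hf n p))).
  assert (Hfs : forall n p, good s G x0 n p -> good s G x0 (S n) (f n p) /\ forall i, (i < n)%nat -> fst (f n p) i = fst p i).
  { intros n p. unfold f. destruct (constructive_indefinite_description _ (Hf n p)) as [p' Hp']. exact Hp'. }
  set (B := iterB f n0 (a, t)).
  assert (HB : forall r, good s G x0 (n0 + r) (B r)).
  { induction r as [|r IH].
    - unfold B; simpl. rewrite Nat.add_0_r. split; assumption.
    - unfold B; simpl. rewrite Nat.add_succ_r. apply Hfs. exact IH. }
  assert (HA1 : forall r i, (i < n0 + r)%nat -> fst (B (S r)) i = fst (B r) i).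
  { intros r i Hi. unfold B; simpl. apply Hfs. apply HB. exact Hi. }
  assert (HA : forall r k i, (i < n0 + r)%nat -> fst (B (k + r)%nat) i = fst (B r) i).
  { intros r k i Hi. induction k as [|k IH]; [reflexivity|].
    simpl. rewrite HA1 by lia. exact IH. }
  set (b := fun i => fst (B (S i)) i).
  assert (Hb : forall r i, (i < n0 + r)%nat -> b i = fst (B r) i).
  { intros r i Hi. unfold b.
    rewrite <- (HA r (S i) i Hi). replace (S i + r)%nat with (r + S i)%nat by lia.
    rewrite (HA (S i) r i) by lia. reflexivity. }
  assert (HbC : forall r z, x0 < z < x0 + snd (B r) -> Cyl s G b (n0 + r) z).
  { intros r z Hz. apply (Cyl_ext s G (fst (B r))).
    - intros i Hi. symmetry. apply Hb. exact Hi.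
    - apply HB. exact Hz. }
  assert (Vb : valid_seq s b).
  { intros i. destruct (HB (S i)) as [Hp Hc].
    destruct (HbC (S i) (x0 + snd (B (S i)) / 2) ltac:(lra)) as [e [Ve [Ae _]]].
    rewrite <- Ae by lia. apply Ve. }
  assert (Hz : forall N, Cyl s G b N (G b)).
  { intros N. exists b. split; [exact Vb|split; [reflexivity|reflexivity]]. }
  destruct (Rle_or_lt (G b) x0) as [Hle|Hlt].
  - apply Hout. apply (Cyl_ext s G b).
    + intros i Hi. rewrite (Hb 0%nat i) by lia. reflexivity.
    + destruct (HB 0%nat) as [Hp _].
      apply (HI b n0 (G b) (x0 + snd (B 0%nat) / 2) x0 (Hz n0)).
      * rewrite <- (Nat.add_0_r n0). apply HbC. lra.
      * lra.
  - set (y1 := (x0 + G b) / 2).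
    assert (G b = y1).
    { apply (lim3 s G h3 b y1). intros N. apply (Cyl_mono s G b N (n0 + N)); [lia|].
      destruct (HB N) as [Hp _].
      set (u := Rmin (snd (B N)) (G b - x0)).
      assert (0 < u) by (apply Rmin_glb_lt; lra).
      assert (u <= snd (B N)) by apply Rmin_l. assert (u <= G b - x0) by apply Rmin_r.
      apply (HI b (n0 + N)%nat (x0 + u / 2) (G b) y1).
      - apply HbC. lra.
      - apply Hz.
      - unfold y1. lra. }
    unfold y1 in H. lra.
Qed.

Lemma nth_w (a : nat -> nat) n i : (i < n)%nat -> nth i (map a (seq 0 n)) 0%nat = a i.
Proof.
  intros Hi. rewrite (nth_indep _ _ (a 0%nat)) by (rewrite length_map, length_seq; exact Hi).
  rewrite map_nth, seq_nth by exact Hi. reflexivity.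
Qed.

Lemma Cyl_cyl s g a n y : (forall i, (i < n)%nat -> (a i < s)%nat) ->
  (Cyl s g a n y <-> cylinder s g (map a (seq 0 n)) y).
Proof.
  intros Ha. assert (Hl : length (map a (seq 0 n)) = n) by (rewrite length_map, length_seq; reflexivity).
  split.
  - intros [e [Ve [Ae Ge]]]. exists (fun i => e (i + n)%nat). split; [intros i; apply Ve|].
    rewrite <- Ge. f_equal. apply functional_extensionality. intros i. unfold prepend.
    rewrite Hl. destruct (Nat.ltb_spec i n).
    + rewrite nth_w by assumption. symmetry. apply Ae. assumption.
    + f_equal. lia.
  - intros [e [Ve Ge]]. exists (prepend (map a (seq 0 n)) e).
    split; [|split; [|exact Ge]]; unfold prepend; rewrite Hl.
    + intros i. destruct (Nat.ltb_spec i n); [rewrite nth_w by assumption; apply Ha; assumption|apply Ve].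
    + intros i Hi. destruct (Nat.ltb_spec i n); [apply nth_w; assumption|lia].
Qed.

Lemma HI_g s g (Hc : continuous_encoding s g) : forall a n, is_interval (Cyl s g a n).
Proof.
  intros a n. destruct (classic (forall i, (i < n)%nat -> (a i < s)%nat)) as [Ha|Ha].
  - intros x y z Hx Hy Hz. apply (Cyl_cyl s g a n z Ha).
    apply (proj1 Hc (map a (seq 0 n))) with x y.
    + unfold valid_word. apply Forall_forall. intros d Hd. apply in_map_iff in Hd.
      destruct Hd as [i [<- Hi]]. apply in_seq in Hi. apply Ha. lia.
    + apply (Cyl_cyl s g a n x Ha); exact Hx.
    + apply (Cyl_cyl s g a n y Ha); exact Hy.
    + exact Hz.
  - intros x y z [e [Ve [Ae _]]]. exfalso. apply Ha. intros i Hi. rewrite <- Ae by exact Hi. apply Ve.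
Qed.

Lemma H3_g s g (Hg : is_encoding s g) (Hz : zero_redundancy s g) : H3 s g.
Proof.
  intros a b c Va Vb Vc Hab Hac. apply (proj1 Hz (g a)).
  - apply (proj1 Hg). exact Va.
  - split; auto.
  - split; auto.
  - split; auto.
Qed.

Lemma Cyl_refl s g x0 a n y : Cyl s (fun e => 2 * x0 - g e) a n y <-> Cyl s g a n (2 * x0 - y).
Proof.
  split; intros [e [Ve [Ae Ge]]]; exists e; (split; [exact Ve|split; [exact Ae|lra]]).
Qed.

Lemma HI_refl s g x0 : (forall a n, is_interval (Cyl s g a n)) ->
  forall a n, is_interval (Cyl s (fun e => 2 * x0 - g e) a n).
Proof.
  intros HI a n x y z Hx Hy Hz. apply Cyl_refl. apply Cyl_refl in Hx, Hy.
  apply (HI a n _ _ _ Hy Hx). lra.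
Qed.

Lemma H3_refl s g x0 : H3 s g -> H3 s (fun e => 2 * x0 - g e).
Proof. intros h a b c Va Vb Vc H1 H2. apply h; auto; lra. Qed.

Lemma side_split (S : R -> Prop) x0 :
  (forall t, 0 < t -> exists y, S y /\ (y <> x0 /\ Rabs (y - x0) < t)) ->
  (forall t, 0 < t -> exists y, S y /\ x0 < y < x0 + t) \/
  (forall t, 0 < t -> exists y, S y /\ x0 - t < y < x0).
Proof.
  intros H. destruct (classic (forall t, 0 < t -> exists y, S y /\ x0 < y < x0 + t)) as [H1|H1]; [left; exact H1|right].
  apply not_all_ex_not in H1. destruct H1 as [t1 H1]. apply imply_to_and in H1. destruct H1 as [Ht1 Hno].
  intros t Ht. destruct (H (Rmin t t1) ltac:(apply Rmin_glb_lt; lra)) as [y [Sy [Hy Ha]]].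
  assert (Rmin t t1 <= t) by apply Rmin_l. assert (Rmin t t1 <= t1) by apply Rmin_r.
  apply Rabs_def2 in Ha. destruct (Rlt_or_le x0 y).
  - exfalso. apply Hno. exists y. split; [exact Sy|lra].
  - exists y. split; [exact Sy|]. destruct Ha. split; [lra|]. destruct H2; [assumption|congruence].
Qed.

Theorem lemma1 (s : nat) (hs : (2 <= s)%nat) (g : (nat -> nat) -> R)
  (Hg : is_encoding s g) (Hc : continuous_encoding s g) (Hz : zero_redundancy s g)
  (x0 : R) (c : nat -> nat) (Hx0 : 0 <= x0 <= 1) (Hu : unary_with_code s g x0 c)
  (x : nat -> R) (alpha : nat -> nat -> nat) (m : nat -> nat)
  (Hx : forall k, 0 <= x k <= 1 /\ x k <> x0)
  (Halpha : forall k, is_code s g (x k) (alpha k))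
  (Hm : forall k, first_diff (alpha k) c (m k)) :
  Un_cv x x0 <-> tends_to_infinity m.
Proof.
  pose proof (HI_g s g Hc) as HI. pose proof (H3_g s g Hg Hz) as h3.
  destruct Hu as [[Vc Gc] Uc].
  assert (Hxc : forall k N, (N <= m k)%nat -> Cyl s g c N (x k)).
  { intros k N HN. destruct (Halpha k) as [Va Ga]. exists (alpha k). split; [exact Va|split; [|exact Ga]].
    intros i Hi. apply (proj2 (Hm k)). lia. }
  assert (Hx0c : forall N, Cyl s g c N x0).
  { intros N. exists c. split; [exact Vc|split; [reflexivity|exact Gc]]. }
  split.
  - intros Hcv. apply NNPP. intros Hnt. unfold tends_to_infinity in Hnt.
    apply not_all_ex_not in Hnt. destruct Hnt as [M HM].
    assert (HM' : forall N, exists k, (N <= k)%nat /\ (m k < M)%nat).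
    { intros N. apply NNPP. intros H. apply HM. exists N. intros k Hk.
      destruct (Nat.lt_ge_cases (m k) M); [|assumption]. exfalso. apply H. exists k. split; assumption. }
    set (S2 := fun j d y => d <> c j /\ Cyl s g (upd c j d) (S j) y).
    set (Q := fun t y => y <> x0 /\ Rabs (y - x0) < t).
    assert (HQ : forall t t' y, Q t y -> t <= t' -> Q t' y) by (unfold Q; intros; split; [tauto|lra]).
    destruct (pigeon (fun j y => exists d, (d < s)%nat /\ S2 j d y) Q HQ M) as [j [Hj Hacc]].
    { intros t Ht. destruct (Hcv t Ht) as [N HN]. destruct (HM' N) as [k [Hk Hmk]].
      exists (x k). split.
      - exists (m k). split; [exact Hmk|]. exists (alpha k (m k)). split; [apply (proj1 (Halpha k))|].
        split; [apply (proj1 (Hm k))|].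
        destruct (Halpha k) as [Va Ga]. exists (alpha k). split; [exact Va|split; [|exact Ga]].
        intros i Hi. unfold upd. destruct (Nat.eqb_spec i (m k)) as [->|Hne]; [reflexivity|].
        apply (proj2 (Hm k)). lia.
      - split; [apply Hx|]. apply HN. exact Hk. }
    destruct (pigeon (fun d y => S2 j d y) Q HQ s) as [d [Hd Hacc2]].
    { intros t Ht. destruct (Hacc t Ht) as [y [[d [Hd Sy]] Qy]]. exists y. split; [exists d; split; assumption|exact Qy]. }
    assert (Hdc : d <> c j).
    { destruct (Hacc2 1 ltac:(lra)) as [y [[H _] _]]. exact H. }
    set (a := upd c j d).
    assert (Hout : ~ Cyl s g a (S j) x0).
    { intros [e [Ve [Ae Ge]]]. assert (e = c) as -> by (apply Uc; split; assumption).
      apply Hdc. rewrite (Ae j) by lia. unfold a, upd. rewrite Nat.eqb_refl. reflexivity. }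
    destruct (side_split (Cyl s g a (S j)) x0) as [Hr|Hl].
    { intros t Ht. destruct (Hacc2 t Ht) as [y [[_ Sy] Qy]]. exists y. split; [exact Sy|exact Qy]. }
    + destruct (right_fill _ x0 (HI a (S j)) Hr) as [t [Ht Hin]].
      exact (main_right s g x0 HI h3 a (S j) t Ht Hin Hout).
    + set (G' := fun e => 2 * x0 - g e).
      assert (Hr : forall t, 0 < t -> exists y, Cyl s G' a (S j) y /\ x0 < y < x0 + t).
      { intros t Ht. destruct (Hl t Ht) as [y [Sy Hy]]. exists (2 * x0 - y). split; [|lra].
        apply Cyl_refl. replace (2 * x0 - (2 * x0 - y)) with y by ring. exact Sy. }
      destruct (right_fill _ x0 (HI_refl s g x0 HI a (S j)) Hr) as [t [Ht Hin]].
      apply (main_right s G' x0 (HI_refl s g x0 HI) (H3_refl s g x0 h3) a (S j) t Ht Hin).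
      intros H. apply Cyl_refl in H. apply Hout. replace x0 with (2 * x0 - x0) by ring. exact H.
  - intros Ht eps Heps. apply NNPP. intros Hno.
    assert (HN : forall N, exists n, (n >= N)%nat /\ Rabs (x n - x0) >= eps).
    { intros N. apply NNPP. intros H. apply Hno. exists N. intros n Hn. unfold R_dist.
      destruct (Rlt_or_le (Rabs (x n - x0)) eps) as [l|l]; [exact l|]. exfalso. apply H. exists n. split; [exact Hn|lra]. }
    assert (Hor : forall N, Cyl s g c N (x0 + eps) \/ Cyl s g c N (x0 - eps)).
    { intros N. destruct (Ht N) as [K HK]. destruct (HN K) as [n [Hn Hxn]].
      pose proof (Hxc n N (HK n Hn)) as Hxn'.
      destruct (Rle_or_lt 0 (x n - x0)).
      - rewrite Rabs_right in Hxn by lra. left. apply (HI c N x0 (x n)); [apply Hx0c|exact Hxn'|lra].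
      - rewrite Rabs_left in Hxn by lra. right. apply (HI c N (x n) x0); [exact Hxn'|apply Hx0c|lra]. }
    destruct (classic (forall N, Cyl s g c N (x0 + eps))) as [Hp|Hp].
    + pose proof (lim3 s g h3 c _ Hp). lra.
    + apply not_all_ex_not in Hp. destruct Hp as [N1 HN1].
      assert (Hm' : forall N, Cyl s g c N (x0 - eps)).
      { intros N. destruct (Hor (N + N1)%nat) as [H|H].
        - exfalso. apply HN1. apply (Cyl_mono s g c N1 (N + N1)); [lia|exact H].
        - apply (Cyl_mono s g c N (N + N1)); [lia|exact H]. }
      pose proof (lim3 s g h3 c _ Hm'). lra.
Qed.
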